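(* Let $\mathbf{B}$ be a unital ring and $F\colon\mathfrak{XMod}\to\mathfrak{Mod}$ a module functor. Then $F$ is polynomial of degree at most $n$ if and only if the additive functor $\Phi(F)\colon\mathfrak{Laby}\to\mathfrak{Mod}$ vanishes on all finite sets with more than $n$ elements; equivalently, if and only if $\Phi(F)$ vanishes on all mazes with more than $n$ passages.
   Context: $\mathfrak{XMod}$: finitely generated free right $\mathbf{B}$-modules with right-module homomorphisms; $\mathfrak{Mod}$: all $\mathbf{B}$-modules; a module functor is any (not necessarily additive) functor $\mathfrak{XMod}\to\mathfrak{Mod}$. For homomorphisms $\alpha_1,\dots,\alpha_k$ with common source and target, $F(\alpha_1\diamond\cdots\diamond\alpha_k)=\sum_{I\subseteq\{1,\dots,k\}}(-1)^{k-|I|}F(\sum_{i\in I}\alpha_i)$. $F$ is polynomial of degree at most $n$ if $F(\alpha_1\diamond\cdots\diamond\alpha_{n+1})=0$ for all homomorphisms $\alpha_1,\dots,\alpha_{n+1}\colon M\to N$ and all $M,N$. For a finite set $X$, $\mathbf{B}^X$ has basis $(e_x)$; $b\sigma_{yx}\colon\mathbf{B}^X\to\mathbf{B}^Y$ is the map $e_x\mapsto e_yb$, $e_{x'}\mapsto 0$ ($x'\ne x$); $\pi_x=\sigma_{xx}$; $\mathrm{cr}_XF(\mathbf{B})=\operatorname{Im}F(\diamond_{x\in X}\pi_x)$. A passage $p\colon x\to y$ between elements of finite sets carries a label $\overline p\in\mathbf{B}$. A maze $P\colon X\to Y$ is a finite multi-set of passages from elements of $X$ to elements of $Y$ such that each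 element of $X$ is a source and each element of $Y$ a target of some passage. $\mathfrak{Laby}$ is the category whose objects are formal finite direct sums of finite sets and whose hom-group $\mathfrak{Laby}(X,Y)$ is generated by mazes $X\to Y$ modulo the relations $P\cup\{x\xrightarrow{0}y\}=0$ and $P\cup\{x\xrightarrow{a+b}y\}=P\cup\{x\xrightarrow{a}y\}+P\cup\{x\xrightarrow{b}y\}+P\cup\{x\xrightarrow{a}y,x\xrightarrow{b}y\}$ (for multi-sets of passages $P$), with composition $P\circ Q=\sum_{U\sqsubseteq P\boxtimes Q}U$, where $U$ ranges over sub-multi-sets of the multi-set of composable pairs $(p,q)$ ($q\colon x\to y\in Q$, $p\colon y\to z\in P$) using every passage occurrence of $P$ and of $Q$, and $U$ is read as the maze with passages $x\xrightarrow{\overline p\,\overline q}z$. $\Phi(F)\colon\mathfrak{Laby}\to\mathfrak{Mod}$ is the additive functor with $\Phi(F)(X)=\mathrm{cr}_XF(\mathbf{B})$ and $\Phi(F)(P)$ the restriction of $F(\diamond_{p\in P}\overline p\sigma_{y_px_p})$ (product over passage occurrences $p\colon x_p\to y_p$) to $\mathrm{cr}_XF(\mathbf{B})\to\mathrm{cr}_YF(\mathbf{B})$. *)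

(* Defs.v *)
From HB Require Import structures.
From mathcomp Require Import all_boot all_order all_algebra.
Set Implicit Arguments. Unset Strict Implicit. Unset Printing Implicit Defensive.
Import GRing.Theory.
Local Open Scope ring_scope.

(* XMod is modelled by its skeleton: the objects are the standard free right
   B-modules B^m (m : nat), i.e. column vectors 'cV[B]_m, and a right-module
   homomorphism B^m -> B^k is a matrix A : 'M[B]_(k, m) acting by v |-> A *m v
   (composition = matrix product, sum of homomorphisms = sum of matrices).
   Right B-modules are left modules over the converse ring B^c. *)

Record moduleFunctor (B : pzRingType) := ModuleFunctor {
  Fobj : nat -> lmodType B^c;
  Fmap : forall m k, 'M[B]_(k, m) -> {linear Fobj m -> Fobj k};
  Fmap_id : forall m (v : Fobj m), Fmap (1%:M : 'M[B]_m) v = v;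
  Fmap_comp : forall m k l (A : 'M[B]_(l, k)) (C : 'M[B]_(k, m)) (v : Fobj m),
      Fmap (A *m C) v = Fmap A (Fmap C v)
}.

Section Defs.
Variable B : pzRingType.
Variable F : moduleFunctor B.

Definition diam m k (s : seq 'M[B]_(k, m)) (v : Fobj F m) : Fobj F k :=
  \sum_(I : {set 'I_(size s)})
     ((-1) ^+ (size s - #|I|)%N : B^c) *: Fmap F (\sum_(i in I) s`_i) v.

Definition polynomial_deg (n : nat) : Prop :=
  forall m k (s : seq 'M[B]_(k, m)), size s = n.+1 ->
    forall v : Fobj F m, diam s v = 0.

Definition bsigma m k (b : B) (y : 'I_k) (x : 'I_m) : 'M[B]_(k, m) :=
  b *: delta_mx y x.

Definition proj m (x : 'I_m) : 'M[B]_m := bsigma 1 x x.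

Definition cross_effect m (w : Fobj F m) : Prop :=
  exists v : Fobj F m, w = diam [seq proj x | x <- enum 'I_m] v.

Definition Phi_obj_vanishes m : Prop :=
  forall w : Fobj F m, cross_effect w -> w = 0.

(* A passage x -> y with label b is (x, y, b); a maze X -> Y is a finite
   multiset of passages (a list; order is irrelevant) such that every element
   of X is a source and every element of Y a target. *)
Definition passage m k := ('I_m * 'I_k * B)%type.

Definition is_maze m k (P : seq (passage m k)) : Prop :=
  (forall x : 'I_m, exists2 p, p \in P & p.1.1 = x) /\
  (forall y : 'I_k, exists2 p, p \in P & p.1.2 = y).

Definition Phi_maze m k (P : seq (passage m k)) (w : Fobj F m) : Fobj F k :=
  diam [seq bsigma p.2 p.1.2 p.1.1 | p <- P] w.

Definition Phi_maze_vanishes m k (P : seq (passage m k)) : Prop :=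
  forall w : Fobj F m, cross_effect w -> Phi_maze P w = 0.

End Defs.

(* Main.v *)
Require Import Defs.
From mathcomp Require Import all_boot all_order all_algebra.

Set Implicit Arguments. Unset Strict Implicit. Unset Printing Implicit Defensive.
Import GRing.Theory.
Local Open Scope ring_scope.
From mathcomp Require Import zify.

Lemma sub_swap (V : zmodType) (a b c d : V) : (a - b) - (c - d) = (a - c) - (b - d).
Proof. by rewrite !opprB addrACA [RHS]addrACA [- c + _]addrC. Qed.

Lemma big_set_rec (V : zmodType) n (G : {set 'I_n.+1} -> V) :
  \sum_(I : {set 'I_n.+1}) G I =
  \sum_(J : {set 'I_n}) G (lift ord0 @: J) +
  \sum_(J : {set 'I_n}) G (ord0 |: lift ord0 @: J).
Proof.
rewrite [LHS](bigID (fun I : {set 'I_n.+1} => ord0 \in I)) /= addrC; congr (_ + _).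
  rewrite (reindex_onto (fun J : {set 'I_n} => lift ord0 @: J) (fun I : {set 'I_n.+1} => [set j | lift ord0 j \in I])).
    apply: eq_bigl => J /=; apply/andP; split.
      by apply/imsetP => -[j _ /eqP]; rewrite (negbTE (neq_lift _ _)).
    by apply/eqP/setP => j; rewrite inE (mem_imset _ _ (@lift_inj _ ord0)).
  move=> I H0; apply/setP => x; case: (unliftP ord0 x) => [j ->|->].
    by rewrite (mem_imset _ _ (@lift_inj _ ord0)) inE.
  by rewrite (negbTE H0); apply/negbTE/imsetP => -[j _ /eqP]; rewrite (negbTE (neq_lift _ _)).
rewrite (reindex_onto (fun J : {set 'I_n} => ord0 |: lift ord0 @: J) (fun I : {set 'I_n.+1} => [set j | lift ord0 j \in I])).
  apply: eq_bigl => J; rewrite setU11 /=; apply/eqP/setP => j.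
  by rewrite inE in_setU1 eq_sym (negbTE (neq_lift _ _)) (mem_imset _ _ (@lift_inj _ ord0)).
move=> I H0; apply/setP => x; rewrite in_setU1; case: (unliftP ord0 x) => [j ->|->].
  by rewrite eq_sym (negbTE (neq_lift _ _)) (mem_imset _ _ (@lift_inj _ ord0)) inE.
by rewrite eqxx H0.
Qed.

Section Dr.
Variable B : pzRingType.
Variable F : moduleFunctor B.

Fixpoint Dr m k (c : 'M[B]_(k, m)) (s : seq 'M[B]_(k, m)) (v : Fobj F m) : Fobj F k :=
  match s with [::] => Fmap F c v | a :: s' => Dr (c + a) s' v - Dr c s' v end.

Lemma DrE m k c (s : seq 'M[B]_(k, m)) v :
  Dr c s v = \sum_(I : {set 'I_(size s)})
     ((-1) ^+ (size s - #|I|)%N : B^c) *: Fmap F (c + \sum_(i in I) s`_i) v.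
Proof.
elim: s c => [|a s IH] c /=.
  rewrite (big_pred1 set0) => [|I]; last by apply/esym/eqP/setP => -[].
  by rewrite big_set0 addr0 cards0 expr0 scale1r.
rewrite IH IH big_set_rec addrC; congr (_ + _).
  rewrite -sumrN; apply: eq_bigr => J _.
  rewrite card_imset; last exact: lift_inj.
  rewrite big_imset /=; last by move=> x y _ _; exact: lift_inj.
  have HJ : (#|J| <= size s)%N by rewrite -[X in (_ <= X)%N]card_ord max_card.
  by rewrite subSn // exprS mulN1r scaleNr.
apply: eq_bigr => J _.
have Hn : ord0 \notin lift ord0 @: J.
  by apply/imsetP => -[j _ /eqP]; rewrite (negbTE (neq_lift _ _)).
rewrite cardsU1 Hn card_imset; last exact: lift_inj.
rewrite big_setU1 //= big_imset /=; last by move=> x y _ _; exact: lift_inj.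
by rewrite addrA.
Qed.

Lemma diamE m k (s : seq 'M[B]_(k, m)) v : diam s v = Dr 0 s v.
Proof. by rewrite DrE /diam; apply: eq_bigr => I _; rewrite add0r. Qed.

Lemma DrR m k m' c (s : seq 'M[B]_(k, m)) (g : 'M[B]_(m, m')) v :
  Dr c s (Fmap F g v) = Dr (c *m g) [seq a *m g | a <- s] v.
Proof.
elim: s c => [|a s IH] c /=; first by rewrite Fmap_comp.
by rewrite !IH mulmxDl.
Qed.

Lemma DrL m k k' c (s : seq 'M[B]_(k, m)) (b : 'M[B]_(k', k)) v :
  Fmap F b (Dr c s v) = Dr (b *m c) [seq b *m a | a <- s] v.
Proof.
elim: s c => [|a s IH] c /=; first by rewrite Fmap_comp.
by rewrite linearB !IH mulmxDr.
Qed.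

Lemma DrB m k c (s : seq 'M[B]_(k, m)) x y : Dr c s (x - y) = Dr c s x - Dr c s y.
Proof.
elim: s c => [|a s IH] c /=; first exact: linearB.
by rewrite !IH sub_swap.
Qed.

Lemma Dr_rcons m k c (s : seq 'M[B]_(k, m)) x v : Dr c (rcons s x) v = Dr c (x :: s) v.
Proof.
elim: s c => [|a s IH] c //=; rewrite !IH /= sub_swap.
by rewrite -!addrA [a + x]addrC.
Qed.

Lemma Dr_catC m k c (s t : seq 'M[B]_(k, m)) v : Dr c (s ++ t) v = Dr c (t ++ s) v.
Proof.
elim: s t => [|x s IH] t; first by rewrite cats0.
by rewrite cat_cons -Dr_rcons rcons_cat IH cat_rcons.
Qed.

Lemma Dr_mem0 m k c (s : seq 'M[B]_(k, m)) v : 0 \in s -> Dr c s v = 0.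
Proof.
case/splitPr=> s1 s2; rewrite Dr_catC /= addr0; exact: subrr.
Qed.

Lemma Dr_split m k c (a b : 'M[B]_(k, m)) s v :
  Dr c (a + b :: s) v = Dr c (a :: b :: s) v + Dr c (a :: s) v + Dr c (b :: s) v.
Proof.
rewrite /= addrA [c + a + b]addrAC.
set A := Dr _ s v; set X := Dr (c + b) s v; set Y := Dr (c + a) s v; set Z := Dr c s v.
rewrite !opprB !addrA.
by rewrite [A - Y + Z - X + Y]addrAC [A - Y + Z + Y]addrAC subrK [A + Z - X - Z]addrAC addrK subrK.
Qed.

End Dr.

Section Main.
Variable B : pzRingType.
Variable F : moduleFunctor B.
Variable n : nat.

Lemma Dr_prop (H : forall m k (s : seq 'M[B]_(k, m)), size s = n.+1 -> forall v : Fobj F m, Dr 0 s v = 0)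
  m k (s : seq 'M[B]_(k, m)) (v : Fobj F m) : (n < size s)%N -> Dr 0 s v = 0.
Proof.
have [N] := ubnP (size s); elim: N s v => [|N IH] s v //= HN Hn.
have [Hs|Hs] := eqVneq (size s) n.+1; first exact: H.
case: s HN Hn Hs => [|a [|b s']] //=.
  by move=> _; rewrite ltnS leqn0 => /eqP ->.
move=> HN Hn Hs.
have E := Dr_split 0 a b s' v.
rewrite [Dr 0 (a + b :: s') v]IH ?[Dr 0 (a :: s') v]IH ?[Dr 0 (b :: s') v]IH /= in E; try lia.
by rewrite !addr0 in E.
Qed.

Hypothesis Hcr : forall N, (n < N)%N -> Phi_obj_vanishes F N.

Lemma Zgood m k (t : seq ('cV[B]_k * 'rV[B]_m)) (v : Fobj F m) :
  (n < size t)%N -> Dr 0 [seq p.1 *m p.2 | p <- t] v = 0.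
Proof.
move=> Hn; set N := size t; pose d := (0 : 'cV[B]_k, 0 : 'rV[B]_m).
pose b : 'M[B]_(k, N) := \matrix_(y, j) (nth d t j).1 y 0.
pose g : 'M[B]_(N, m) := \matrix_(j, x) (nth d t j).2 0 x.
have E : [seq p.1 *m p.2 | p <- t] = [seq b *m (proj B x *m g) | x <- enum 'I_N].
  rewrite -{1}(mkseq_nth d t) /mkseq -val_enum_ord -map_comp -map_comp.
  apply: eq_map => j /=.
  rewrite /proj /bsigma scale1r -(mul_delta_mx (0 : 'I_1)) -mulmxA (mulmxA b) -colE -rowE.
  congr (_ *m _); apply/matrixP => i i'; rewrite !mxE; (try rewrite (ord1 i)); (try rewrite (ord1 i')); done.
have H0 := Hcr Hn (ex_intro _ (Fmap F g v) erefl).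
rewrite diamE DrR in H0.
have := congr1 (Fmap F b) H0; rewrite DrL mul0mx mulmx0 -map_comp linear0 E => <-.
by congr (Dr _ _ _); rewrite -[RHS]map_comp.
Qed.


Definition sumf m k (l : seq ('cV[B]_k * 'rV[B]_m)) := \sum_(p <- l) p.1 *m p.2.

Lemma Zbase m k (L : seq (seq ('cV[B]_k * 'rV[B]_m))) (v : Fobj F m) :
  ~~ has (fun l => 1 < size l)%N L -> (n < size L)%N -> Dr 0 [seq sumf l | l <- L] v = 0.
Proof.
move=> /hasPn Hh Hn; pose d := (0 : 'cV[B]_k, 0 : 'rV[B]_m).
have -> : [seq sumf l | l <- L] = [seq p.1 *m p.2 | p <- [seq head d l | l <- L]].
  rewrite -map_comp; apply/eq_in_map => l /Hh /=.
  case: l => [|p [|q l']] //= _; rewrite /sumf ?big_nil ?big_seq1 //.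
  by rewrite mul0mx.
by apply: Zgood; rewrite size_map.
Qed.

Lemma Zmain m k N (L : seq (seq ('cV[B]_k * 'rV[B]_m))) (v : Fobj F m) :
  (sumn [seq (size l).-1 | l <- L] <= N)%N -> (n < size L)%N ->
  Dr 0 [seq sumf l | l <- L] v = 0.
Proof.
elim: N L v => [|N IH] L v Hs Hn; (case: (boolP (has (fun l => 1 < size l)%N L)) => Hh;
   last exact: Zbase).
  case/hasP: Hh => l Hl Hsz; case/splitPr: Hl Hs => L1 L2.
  rewrite map_cat sumn_cat /=; case: l Hsz => [|p [|q l']] //= _; lia.
case/hasP: Hh => l Hl Hsz; case/splitPr: Hl Hs Hn => L1 L2.
case: l Hsz => [|p [|q l']] //= _ Hs Hn.
rewrite map_cat Dr_catC map_cons [(_ :: _) ++ _]/= -map_cat /sumf big_cons Dr_split.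
have h1 := IH [:: [:: p], q :: l' & L2 ++ L1] v.
have h2 := IH [:: [:: p] & L2 ++ L1] v.
have h3 := IH [:: q :: l' & L2 ++ L1] v.
rewrite !map_cons /sumf big_seq1 in h1 h2 h3.
rewrite h1 ?h2 ?h3 ?addr0 //; rewrite /= ?map_cat ?sumn_cat ?size_cat /=;
  rewrite map_cat sumn_cat size_cat /= in Hs Hn; lia.
Qed.

End Main.

Section Idem.
Variable B : pzRingType.
Variable F : moduleFunctor B.
Variable m : nat.

Definition DD (v : Fobj F m) := Dr 0 [seq proj B x | x <- enum 'I_m] v.
Definition piK (K : {set 'I_m}) : 'M[B]_m := \sum_(x in K) proj B x.

Lemma proj_mul (x y : 'I_m) : proj B y *m proj B x = proj B y *+ (y == x).
Proof.
rewrite /proj /bsigma !scale1r mul_delta_mx_cond.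
by case: eqP => [->|].
Qed.

Lemma proj_piK y K : proj B y *m piK K = proj B y *+ (y \in K).
Proof.
rewrite /piK mulmx_sumr; case: (boolP (y \in K)) => Hy.
  rewrite (bigD1 y) //= proj_mul eqxx big1 ?addr0 // => x /andP [_ Hx].
  by rewrite proj_mul eq_sym (negbTE Hx).
rewrite big1 // => x Hx; rewrite proj_mul; case: eqP => // E.
by rewrite E Hx in Hy.
Qed.

Lemma idem_aux (l : seq 'I_m) (K : {set 'I_m}) (v : Fobj F m) :
  uniq l -> (forall y, y \in l -> y \notin K) ->
  DD (Dr (piK K) [seq proj B x | x <- l] v) =
  if [forall y, (y \in K) || (y \in l)] then DD v else 0.
Proof.
elim: l K => [|x l IH] K /=.
  move=> _ _; rewrite /DD DrR mul0mx -map_comp.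
  case: (boolP [forall y, (y \in K) || (y \in [::])]) => [/forallP H | /forallPn [y Hy]].
    congr (Dr _ _ _); apply: eq_map => y /=; rewrite proj_piK.
    by move: (H y); rewrite orbF => ->.
  apply: Dr_mem0; apply/mapP; exists y; first by rewrite mem_enum.
  by rewrite /= proj_piK; move: Hy; rewrite orbF => /negbTE ->.
move=> /andP [Hxl Hu] Hd.
have HxK : x \notin K by apply: Hd; rewrite inE eqxx.
rewrite /DD DrB -!/(DD _).
have -> : piK K + proj B x = piK (x |: K) by rewrite /piK big_setU1 //= addrC.
have HdK : forall y, y \in l -> y \notin K.
  by move=> y Hy; apply: Hd; rewrite inE Hy orbT.
have HdxK : forall y, y \in l -> y \notin x |: K.
  move=> y Hy; rewrite in_setU1 negb_or HdK // andbT.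
  by apply/eqP => E; move: Hxl; rewrite -E Hy.
rewrite (IH _ Hu HdxK) (IH _ Hu HdK).
have -> : [forall y, (y \in K) || (y \in l)] = false.
  apply/negbTE/forallPn; exists x; by rewrite negb_or HxK.
have -> : [forall y, (y \in x |: K) || (y \in l)] = [forall y, (y \in K) || (y \in x :: l)].
  by apply: eq_forallb => y; rewrite in_setU1 in_cons -orbA orbCA.
by rewrite subr0.
Qed.

Lemma DD_idem (v : Fobj F m) : DD (DD v) = DD v.
Proof.
have := @idem_aux (enum 'I_m) set0 v (enum_uniq _) (fun y _ => negbT (in_set0 y)).
have -> : piK set0 = 0 by rewrite /piK big_set0.
have -> : [forall y, (y \in set0) || (y \in enum 'I_m)] by apply/forallP => y; rewrite mem_enum orbT.
by [].
Qed.

End Idem.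

Lemma sum_delta_id (B : pzRingType) m : \sum_(x < m) delta_mx x x = 1%:M :> 'M[B]_m.
Proof.
apply/matrixP => i j; rewrite summxE !mxE (bigD1 i) //= !mxE eqxx big1 ?addr0.
  by rewrite eq_sym.
by move=> x /negbTE Hx; rewrite mxE eq_sym Hx.
Qed.

Theorem mainTheorem2 (B : pzRingType) (F : moduleFunctor B) (n : nat) :
  (polynomial_deg F n <-> (forall m : nat, (n < m)%N -> Phi_obj_vanishes F m)) /\
  (polynomial_deg F n <->
     (forall (m k : nat) (P : seq (passage B m k)),
        is_maze P -> (n < size P)%N -> Phi_maze_vanishes F P)).
Proof.
have Hprop : polynomial_deg F n -> forall m k (s : seq 'M[B]_(k, m)) (v : Fobj F m),
    (n < size s)%N -> Dr 0 s v = 0.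
  move=> Hp m k s v Hs; apply: Dr_prop Hs => m' k' s' Hs' v'.
  by rewrite -diamE; exact: Hp.
have P1 : polynomial_deg F n <-> (forall m, (n < m)%N -> Phi_obj_vanishes F m).
  split.
    move=> Hp m Hm w [v ->]; rewrite diamE; apply: Hprop => //.
    by rewrite size_map size_enum_ord.
  move=> Hcr m k s Hs v; rewrite diamE.
  pose L := [seq [seq (a *m delta_mx x (0:'I_1), delta_mx (0:'I_1) x : 'rV[B]_m) | x <- enum 'I_m] | a <- s].
  have -> : s = [seq sumf l | l <- L].
    rewrite -map_comp -{1}(map_id s); apply: eq_map => a /=.
    rewrite /sumf big_map big_enum /=.
    under eq_bigr do rewrite -mulmxA mul_delta_mx.
    by rewrite -mulmx_sumr sum_delta_id mulmx1.
  by apply: (Zmain Hcr v (leqnn _)); rewrite size_map Hs.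
split => //; split => [Hp | Hm].
  move=> m k P _ HP w _; rewrite /Phi_maze diamE; apply: Hprop; first exact: Hp.
  by [|rewrite size_map].
apply/P1 => N HN w [v ->].
have H := Hm N N [seq (x, x, 1) | x <- enum 'I_N].
rewrite size_map size_enum_ord in H.
have {H} H := H _ HN (diam [seq proj B x | x <- enum 'I_N] v) (ex_intro _ v erefl).
  have Eq : [seq bsigma p.2 p.1.2 p.1.1 | p <- [seq (x, x, 1) | x <- enum 'I_N]] =
     [seq proj B x | x <- enum 'I_N] by rewrite -[LHS]map_comp.
  rewrite /Phi_maze Eq !diamE in H.
  have E := DD_idem v; rewrite /DD in E.
  rewrite diamE -E; apply: H.
by split => x; exists (x, x, 1); rewrite ?map_f ?mem_enum.
Qed.
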